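(* Consider $f(x)=x^2+x$ as a map $\mathbb{Z}_2\to\mathbb{Z}_2$. Then $0$ is a fixed point, $f(1+2\mathbb{Z}_2)\subset 2\mathbb{Z}_2$, and $$2\mathbb{Z}_2=\{0\}\sqcup\Big(\bigsqcup_{n\ge2}\big(2^{n-1}+2^n\mathbb{Z}_2\big)\Big),$$ where for each $n\ge2$ the set $2^{n-1}+2^n\mathbb{Z}_2$ is the disjoint union of the $2^{n-2}$ minimal components $$2^{n-1}+t2^n+2^{2n-2}\mathbb{Z}_2,\qquad t=0,\dots,2^{n-2}-1.$$
   Context: A minimal component of $f$ is a clopen set $E\subset\mathbb{Z}_2$ with $f(E)\subset E$ such that $f:E\to E$ is minimal (every orbit in $E$ is dense in $E$). *)

(* Defs.v *)
(* The ring Z_2 of 2-adic integers is modelled as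
   coherent sequences of residues: x_n = x mod 2^n, with x_n < 2^n and
   x_{n+1} mod 2^n = x_n (the inverse limit of Z/2^nZ). *)
From mathcomp Require Import all_boot.
Set Implicit Arguments. Unset Strict Implicit. Unset Printing Implicit Defensive.

Definition coherent (x : nat -> nat) : Prop :=
  forall n, x n < 2 ^ n /\ x n.+1 %% 2 ^ n = x n.

Record Z2 := mkZ2 { res : nat -> nat; resP : coherent res }.

Lemma coherent0 : coherent (fun _ => 0).
Proof. by move=> n; rewrite expn_gt0 mod0n. Qed.

Definition Z2zero : Z2 := mkZ2 coherent0.

Lemma coherent_f (x : Z2) :
  coherent (fun n => (res x n ^ 2 + res x n) %% 2 ^ n).
Proof.
move=> n; split; first by rewrite ltn_pmod // expn_gt0.
have hd : 2 ^ n %| 2 ^ n.+1 by rewrite dvdn_exp2l.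
rewrite modn_dvdm //.
have [_ h] := resP x n.
by rewrite -h -[RHS]modnDm modnXm modn_mod modnDm.
Qed.

Definition f (x : Z2) : Z2 := mkZ2 (coherent_f x).

Definition open_set (A : Z2 -> Prop) : Prop :=
  forall x, A x -> exists n, forall y, res y n = res x n -> A y.
Definition closed_set (A : Z2 -> Prop) : Prop := open_set (fun x => ~ A x).
Definition clopen (A : Z2 -> Prop) : Prop := open_set A /\ closed_set A.

Definition orbit_dense_in (g : Z2 -> Z2) (x : Z2) (E : Z2 -> Prop) : Prop :=
  forall y, E y -> forall m, exists k, res (iter k g x) m = res y m.

Definition minimal_component (g : Z2 -> Z2) (E : Z2 -> Prop) : Prop :=
  clopen E /\ (forall x, E x -> E (g x)) /\ (forall x, E x -> orbit_dense_in g x E).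

Definition level (n : nat) (x : Z2) : Prop := res x n = 2 ^ n.-1.
Definition mincomp (n t : nat) (x : Z2) : Prop :=
  res x (2 * n - 2) = 2 ^ n.-1 + t * 2 ^ n.

(* Main.v *)
Require Import Defs.
From mathcomp Require Import all_boot zify.
From Stdlib Require Import ProofIrrelevance FunctionalExtensionality Classical.

Definition F (v : nat) := v ^ 2 + v.

Lemma F_cong a b d : a = b %[mod d] -> F a = F b %[mod d].
Proof.
have E c : F c = F (c %% d) %[mod d].
  by rewrite /F -[in RHS]modnDm modnXm modn_mod modnDm.
by move=> H; rewrite E H -E.
Qed.

Lemma resK (x : Z2) k n : k <= n -> res x n %% 2 ^ k = res x k.
Proof.
move=> /subnKC <-; elim: (n - k) => [|d IH].
  by rewrite addn0 modn_small //; case: (resP x k).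
rewrite addnS -IH; have [_ <-] := resP x (k + d).
by rewrite modn_dvdm // dvdn_exp2l // leq_addr.
Qed.

Lemma res_iter (x : Z2) k m : res (iter k f x) m = iter k F (res x m) %% 2 ^ m.
Proof.
elim: k => [|k IH] /=; first by rewrite modn_small //; case: (resP x m).
by rewrite IH; apply: F_cong; rewrite modn_mod.
Qed.

Lemma Z2_eq (x y : Z2) : (forall n, res x n = res y n) -> x = y.
Proof.
case: x y => rx px [ry py] /= H.
have E : rx = ry by apply: functional_extensionality.
subst ry; f_equal; apply: proof_irrelevance.
Qed.

Lemma F_ge v : v <= F v. Proof. by rewrite /F leq_addl. Qed.
Lemma iterF_ge k v : v <= iter k F v.
Proof. elim: k => //= k IH; exact: leq_trans IH (F_ge _). Qed.

Lemma F_even w : 2 %| F w.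
Proof.
rewrite /F; case: (boolP (odd w)) => Ho.
  by rewrite dvdn2 oddD oddX Ho.
by rewrite dvdn2 oddD oddX (negbTE Ho).
Qed.

Lemma mod0_dvd a b d : d %| a -> a + b = b %[mod d].
Proof. by move=> /divnK <-; rewrite modnMDl. Qed.

Lemma F_step m w h : 2 <= m -> 2 %| w -> 2 ^ m %| h ->
  F (w + h) = F w + h %[mod 2 ^ (m + 2)].
Proof.
move=> hm hw hh.
have -> : F (w + h) = h * (2 * w + h) + (F w + h) by rewrite /F; lia.
apply: mod0_dvd; rewrite mulnDr; apply: dvdn_add.
  rewrite expnD; apply: dvdn_mul => //; rewrite (_ : 2 ^ 2 = 2 * 2) //.
  by rewrite dvdn_pmul2l.
apply: dvdn_trans (dvdn_mul hh hh); rewrite -expnD dvdn_exp2l //; lia.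
Qed.

Lemma F_iter_step m w h i : 2 <= m -> 2 %| w -> 2 ^ m %| h ->
  iter i F (w + h) = iter i F w + h %[mod 2 ^ (m + 2)].
Proof.
move=> hm hw hh; elim: i => [|i IH] //=.
rewrite (F_cong _ _ _ IH) F_step //.
by case: i {IH} => //= i; apply: F_even.
Qed.

Set Implicit Arguments. Unset Strict Implicit.

Lemma two_cases a b m : a = b %[mod 2 ^ m] ->
  a = b %[mod 2 ^ m.+1] \/ a = b + 2 ^ m %[mod 2 ^ m.+1].
Proof.
move=> H.
set M := 2 ^ m.
have M0 : 0 < M by rewrite expn_gt0.
have E2 : 2 ^ m.+1 = 2 * M by rewrite expnS.
rewrite E2 -modnDml.
have Ha : a %% (2 * M) = (a %% (2 * M)) %/ M * M + a %% M.
  by rewrite {1}(divn_eq (a %% (2 * M)) M) modn_dvdm // dvdn_mull.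
have Hb : b %% (2 * M) = (b %% (2 * M)) %/ M * M + b %% M.
  by rewrite {1}(divn_eq (b %% (2 * M)) M) modn_dvdm // dvdn_mull.
have qa : (a %% (2 * M)) %/ M < 2 by rewrite ltn_divLR // ltn_pmod // muln_gt0.
have qb : (b %% (2 * M)) %/ M < 2 by rewrite ltn_divLR // ltn_pmod // muln_gt0.
have cM : b %% M < M by rewrite ltn_pmod.
rewrite Hb Ha H -/M.
clear Ha Hb E2 H; clearbody M.
move: qa qb; move: ((a %% (2 * M)) %/ M) ((b %% (2 * M)) %/ M) => x y.
case: x => [|[|x]] // _; case: y => [|[|y]] // _; rewrite ?mul0n ?mul1n ?add0n.
- by left.
- right; rewrite (_ : M + b %% M + M = 1 * (2 * M) + b %% M); last by lia.
  rewrite modnMDl (@modn_small (b %% M)); lia.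
- right; rewrite (@modn_small (b %% M + M)); lia.
- by left.
Qed.

Section K.
Variable n : nat.
Hypothesis hn : 2 <= n.
Definition C u := u %% 2 ^ n = 2 ^ n.-1.

Lemma pow_split : 2 ^ n = 2 * 2 ^ n.-1 /\ 2 ^ (2 * n - 2) = 2 ^ n.-1 * 2 ^ n.-1.
Proof.
split; first by rewrite -expnS prednK //; lia.
by rewrite -expnD; congr (2 ^ _); lia.
Qed.

Lemma C_form u : C u -> u = 2 ^ n.-1 * (2 * (u %/ 2 ^ n) + 1).
Proof.
rewrite /C => H; rewrite {1}(divn_eq u (2 ^ n)) H.
have [-> _] := pow_split; lia.
Qed.

Lemma C_F u : C u -> C (F u).
Proof.
move=> H; rewrite /C /F -H; apply: mod0_dvd.
rewrite (C_form H) expnMn; apply: dvdn_mulr.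
by rewrite -expnM dvdn_exp2l //; lia.
Qed.

Lemma C_iter k u : C u -> C (iter k F u).
Proof. by move=> H; elim: k => //= k IH; apply: C_F. Qed.

Lemma C_even u : C u -> 2 %| u.
Proof.
move=> /C_form ->; apply: dvdn_mulr.
by rewrite -{1}(expn1 2) dvdn_exp2l //; lia.
Qed.

Lemma key j u : C u ->
  iter (2 ^ j) F u = u + 2 ^ (2 * n - 2 + j) %[mod 2 ^ (2 * n - 2 + j).+1].
Proof.
elim: j u => [|j IH] u Cu.
  rewrite addn0 /= /F.
  have [_ E] := pow_split.
  rewrite expnS E.
  set P := 2 ^ n.-1; set q := u %/ 2 ^ n.
  have U := C_form Cu; rewrite -/P -/q in U.
  have -> : u ^ 2 + u = (2 * (P * P)) * (2 * q * q + 2 * q) + (u + P * P) by rewrite U; lia.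
  by rewrite expnS E -/P mulnC modnMDl.
set m := 2 * n - 2 + j.
have hm : 2 <= m by rewrite /m; lia.
set u' := iter (2 ^ j) F u.
have Hu := IH u Cu; rewrite -/m -/u' in Hu.
have ge : u <= u' by apply: iterF_ge.
set h := u' - u.
have Eu : u' = u + h by rewrite /h subnKC.
rewrite Eu in Hu.
have Hh : h = 2 ^ m %[mod 2 ^ m.+1] by apply/eqP; rewrite -(eqn_modDl u); apply/eqP.
have Dh : 2 ^ m %| h.
  rewrite /dvdn; apply/eqP; rewrite -(@modn_dvdm (2 ^ m.+1)); last by rewrite dvdn_exp2l.
  by rewrite Hh (@modn_small (2 ^ m) (2 ^ m.+1)) ?ltn_exp2l // modnn.
rewrite (_ : 2 * n - 2 + j.+1 = m.+1); last by rewrite /m; lia.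
rewrite expnS mul2n -addnn iterD -/u' Eu.
have S := F_iter_step m u h (2 ^ j) hm (C_even Cu) Dh.
rewrite (_ : m + 2 = m.+2) in S; last by lia.
have D2 : (2 * h) %% 2 ^ m.+2 = 2 ^ m.+1 %% 2 ^ m.+2.
  by rewrite !(expnS 2 m.+1) -muln_modr Hh muln_modr -!expnS.
by rewrite S -/u' Eu -addnA addnn -mul2n -modnDmr D2 modnDmr.
Qed.

Lemma trans m u v : C u -> C v -> u = v %[mod 2 ^ (2 * n - 2)] ->
  exists k, iter k F u = v %[mod 2 ^ m].
Proof.
move=> Cu Cv Huv; elim: m => [|m [k Hk]].
  by exists 0; rewrite !modn1.
case: (leqP m.+1 (2 * n - 2)) => hm.
  exists 0 => /=; rewrite -(modn_dvdm u (dvdn_exp2l 2 hm)) Huv.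
  by rewrite modn_dvdm // dvdn_exp2l.
case: (two_cases Hk) => H; first by exists k.
have hj : m = 2 * n - 2 + (m - (2 * n - 2)) by clear -hm hn; lia.
exists (2 ^ (m - (2 * n - 2)) + k); rewrite iterD.
have := key (m - (2 * n - 2)) (C_iter k Cu); rewrite -hj => ->.
rewrite -modnDml H modnDml -addnA addnn -mul2n -expnS.
rewrite -modnDmr modnn addn0; reflexivity.
Qed.
End K.

Lemma lev_lt n m x : 2 <= n -> n < m -> level n x -> level m x -> False.
Proof.
move=> hn hnm Ln Lm; have := resK x n m (ltnW hnm).
rewrite Lm Ln; move/eqP; rewrite eq_sym.
have -> : 2 ^ m.-1 %% 2 ^ n = 0.
  by apply/eqP; rewrite -/(dvdn _ _) dvdn_exp2l //; clear -hnm; lia.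
by rewrite expn_eq0.
Qed.

Lemma lev_iff n x : 2 <= n ->
  (level n x <-> exists t, t < 2 ^ (n - 2) /\ mincomp n t x).
Proof.
move=> hn; have hN : n <= 2 * n - 2 by clear -hn; lia.
have E : 2 ^ (n - 2) * 2 ^ n = 2 ^ (2 * n - 2).
  by rewrite -expnD; congr (2 ^ _); clear -hn; lia.
rewrite /level /mincomp; split.
  move=> L; exists (res x (2 * n - 2) %/ 2 ^ n); split.
    rewrite ltn_divLR ?expn_gt0 // E; by case: (resP x (2 * n - 2)).
  by rewrite {1}(divn_eq (res x (2 * n - 2)) (2 ^ n)) resK // L addnC.
case=> t [_ H]; rewrite -(resK x n (2 * n - 2) hN) H addnC modnMDl modn_small //.
by rewrite ltn_exp2l //; clear -hn; lia.
Qed.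

Lemma mincomp_inv n t x : 2 <= n -> mincomp n t x -> mincomp n t (f x).
Proof.
move=> hn; rewrite /mincomp /= => H.
have [E1 E2] := pow_split hn.
have lt : 2 ^ n.-1 + t * 2 ^ n < 2 ^ (2 * n - 2).
  by rewrite -H; case: (resP x (2 * n - 2)).
rewrite H; set P := 2 ^ n.-1; rewrite -/P in E1 E2 lt.
rewrite E1 in lt *.
have -> : (P + t * (2 * P)) ^ 2 = (2 * t + 1) ^ 2 * 2 ^ (2 * n - 2).
  rewrite E2 (_ : P + t * (2 * P) = P * (2 * t + 1)); last by clear; nia.
  by rewrite expnMn expnS expn1; clear; nia.
by rewrite modnMDl modn_small.
Qed.

Theorem theoremE :
  (* 0 is a fixed point *)
  f Z2zero = Z2zero /\
  (* f(1 + 2Z_2) ⊂ 2Z_2 *)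
  (forall x, res x 1 = 1 -> res (f x) 1 = 0) /\
  (* 2Z_2 = {0} ⊔ ⊔_{n>=2} (2^(n-1) + 2^n Z_2) *)
  (forall x, res x 1 = 0 <-> (x = Z2zero \/ exists n, 2 <= n /\ level n x)) /\
  (forall n, 2 <= n -> ~ level n Z2zero) /\
  (forall n m x, 2 <= n -> 2 <= m -> level n x -> level m x -> n = m) /\
  (* each level is the disjoint union of the 2^(n-2) minimal components *)
  (forall n, 2 <= n ->
     (forall x, level n x <-> exists t, t < 2 ^ (n - 2) /\ mincomp n t x) /\
     (forall t s x, t < 2 ^ (n - 2) -> s < 2 ^ (n - 2) ->
        mincomp n t x -> mincomp n s x -> t = s) /\
     (forall t, t < 2 ^ (n - 2) -> minimal_component f (mincomp n t))).
Proof.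
split.
  by apply: Z2_eq => k /=; rewrite exp0n // mod0n.
split; first by move=> x /= ->.
split.
  move=> x; split.
    move=> H1.
    case: (classic (forall k, res x k = 0)) => [Hall|Hn].
      by left; apply: Z2_eq.
    right.
    have ex : exists k, res x k != 0.
      by have [k Hk] := not_all_ex_not _ _ Hn; exists k; apply/eqP.
    case: (ex_minnP ex) => n Hn0 Hmin.
    have n2 : 2 <= n.
      case: n Hn0 Hmin => [|[|n]] //.
        by have [] := resP x 0; rewrite expn0 ltnS leqn0 => /eqP ->.
      by rewrite H1.
    exists n; split => //.
    have Hp : res x n.-1 = 0.
      apply/eqP; apply: contraT => /Hmin; clear -n2; lia.
    have Hm := resK x n.-1 n (leq_pred n); rewrite Hp in Hm.
    have [lt _] := resP x n.
    rewrite /level.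
    have P0 : 0 < 2 ^ n.-1 by rewrite expn_gt0.
    have E2 : 2 ^ n = 2 * 2 ^ n.-1 by rewrite -expnS prednK //; clear -n2; lia.
    have Er : res x n = res x n %/ 2 ^ n.-1 * 2 ^ n.-1.
      by rewrite {1}(divn_eq (res x n) (2 ^ n.-1)) Hm addn0.
    have : res x n %/ 2 ^ n.-1 < 2 by rewrite ltn_divLR // -E2.
    rewrite Er in Hn0 *; move: Hn0.
    case: (_ %/ _) => [|[|q]] // H0 Hq; [clear; lia | by rewrite mulnK in Hq].

  case=> [->|[n [hn L]]] //.
  rewrite -(resK x 1 n); last by clear -hn; lia.
  rewrite L; apply/eqP; rewrite -/(dvdn _ _) -{1}(expn1 2) dvdn_exp2l //.
  by clear -hn; lia.
split.
  move=> n hn; rewrite /level /= => E.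
  by have := expn_gt0 2 n.-1; rewrite -E.
split.
  move=> n m x hn hm Ln Lm; case: (ltngtP n m) => // h.
    by case: (lev_lt hn h Ln Lm).
  by case: (lev_lt hm h Lm Ln).
move=> n hn; split; first by move=> x; apply: lev_iff.
split.
  move=> t s x _ _; rewrite /mincomp => -> /addnI/eqP.
  by rewrite eqn_pmul2r ?expn_gt0 // => /eqP.
move=> t ht; split.
  split.
    by move=> x H; exists (2 * n - 2) => y E; rewrite /mincomp E.
  by move=> x H; exists (2 * n - 2) => y E; rewrite /mincomp E.
split; first by move=> x; apply: mincomp_inv.
move=> x Hx y Hy m.
set N := 2 * n - 2; set M := m + N.
have hN : n <= N by rewrite /N; clear -hn; lia.
have Cx : C n (res x M).
  rewrite /C resK; last by rewrite /M; clear -hN; lia.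
  by apply/(lev_iff x hn); exists t.
have Cy : C n (res y M).
  rewrite /C resK; last by rewrite /M; clear -hN; lia.
  by apply/(lev_iff y hn); exists t.
have Huv : res x M = res y M %[mod 2 ^ N].
  by rewrite !resK ?leq_addl //; move: Hx Hy; rewrite /mincomp -/N => -> ->.
have [k Hk] := @trans n hn M _ _ Cx Cy Huv.
exists k; rewrite -(resK (iter k f x) m M (leq_addr N m)) res_iter -/M.
have D : 2 ^ m %| 2 ^ M by rewrite dvdn_exp2l // leq_addr.
by rewrite modn_dvdm // -(modn_dvdm _ D) Hk modn_dvdm // resK // leq_addr.
Qed.
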